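(* Let $\mathcal X=\{x\in\mathbb{R}^{n_1}_+: x_i\in\{0,1\}\ \forall i\in\mathcal I\}$, and for $x\in\mathcal X$ let $f(x)$ be the optimal value of the problem $(\mathrm{Inner}(x))$ defined in the context ($f(x)=+\infty$ if it is infeasible). Assume the polyhedra $P_1$ and $P_2$ defined in the context are nonempty. Let $\mathcal J_1,\mathcal R_1$ be the sets of extreme points and extreme rays of $P_1$, and $\mathcal J_2,\mathcal R_2$ the sets of extreme points and extreme rays of $P_2$. Then the problem (MIP) $\min_{x\in\mathcal X} c_x^Tx+f(x)$ is equivalent (same optimal value and same optimal $x$) to the problem $\min_{x\in\mathcal X,\,t\in\mathbb{R}}\ c_x^Tx+t$ subject to (a) $t\ge \hat\psi^T(b-Ax)+\hat u_y^T(h_y-G_{xy}x)-\hat w\,(d^T\hat y-\hat v^T(k+K_xx))$ for all $(\hat\psi,\hat u_y,\hat w)\in\mathcal J_2$, $(\hat y,\hat v)\in\mathcal J_1$; (b) $d^T\tilde y-\tilde v^T(k+K_xx)\ge 0$ for all $(\tilde y,\tilde v)\in\mathcal R_1$; (c) $0\ge \tilde\psi^T(b-Ax)+\tilde u_y^T(h_y-G_{xy}x)$ for all $(\tilde\psi,\tilde u_y,0)\in\mathcal R_2$; (d) $0\ge \tilde\psi^T(b-Ax)+\tilde u_y^T(h_y-G_{xy}x)-\tilde w\,(d^T\hat y-\hat v^T(k+K_xx))$ for all $(\hat y,\hat v)\in\mathcal J_1$ and all $(\tilde\psi,\tilde u_y,\tilde w)\in\mathcal R_2$ with $\tilde w>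0$.
   Context: Data: $c_x\in\mathbb{R}^{n_1}$, $\mathcal I\subseteq\{1,\dots,n_1\}$, $A\in\mathbb{R}^{m\times n_1}$, $B\in\mathbb{R}^{m\times n_2}$, $b\in\mathbb{R}^m$, $c_y,d\in\mathbb{R}^{n_2}$, $G_{xy}\in\mathbb{R}^{p\times n_1}$, $G_y\in\mathbb{R}^{p\times n_2}$, $h_y\in\mathbb{R}^p$, $K_\psi\in\mathbb{R}^{q\times m}$, $K_s\in\mathbb{R}^{q\times r}$, $K_x\in\mathbb{R}^{q\times n_1}$, $k\in\mathbb{R}^q$ (the $K$'s and $k$ come from a McCormick linearization of bilinear terms in a strong-duality reformulation of a bilevel program with lower level $\min_{y\ge0}\{d^Ty:Ax+By\ge b\}$). $\mathbf 1$ is the all-ones vector. $(\mathrm{Inner}(x))$: minimize $c_y^Ty$ over $y\in\mathbb{R}^{n_2}_+,\psi\in\mathbb{R}^m_+,s\in\mathbb{R}^r_+$ subject to $G_yy\ge h_y-G_{xy}x$, $By\ge b-Ax$, $-B^T\psi\ge -d$, $-d^Ty+\psi^Tb-s^T\mathbf 1\ge 0$, $K_\psi\psi+K_ss\ge k+K_xx$. $P_1=\{(y,v)\ge 0: By-K_\psi^Tv\ge b,\ K_s^Tv\le\mathbf 1\}$; $P_2=\{(\psi,u_y,w)\ge 0: B^T\psi+G_y^Tu_y\le dw+c_y\}$ ($w$ scalar). Extreme rays are those of the recession cones of these (pointed) polyhedra. *)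

(* Defs.v *)
From HB Require Import structures.
From mathcomp Require Import all_boot all_order all_algebra.
From mathcomp Require Import all_classical all_reals ereal.
Set Implicit Arguments. Unset Strict Implicit. Unset Printing Implicit Defensive.
Import Order.TTheory GRing.Theory Num.Theory.
Local Open Scope ring_scope.
Local Open Scope classical_set_scope.

Section Defs.
Variable R : realType.

Definition dot n (u v : 'cV[R]_n) : R := \sum_(i < n) u i 0 * v i 0.

Definition lev n (u v : 'cV[R]_n) : Prop := forall i, u i 0 <= v i 0.
Definition nonneg n (u : 'cV[R]_n) : Prop := lev 0 u.

Definition ones n : 'cV[R]_n := const_mx 1.

Definition extreme_point (V : lmodType R) (S : set V) : set V :=
  [set x | S x /\ forall y z, S y -> S z -> forall l : R, 0 < l -> l < 1 ->
             x = l *: y + (1 - l) *: z -> y = z].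

Definition rec_cone (V : lmodType R) (S : set V) : set V :=
  [set d | forall x, S x -> forall l : R, 0 <= l -> S (x + l *: d)].

(* Extreme rays of a cone C: nonzero directions d in C such that any
   decomposition d = d1 + d2 inside C uses nonnegative multiples of d.
   (Every nonzero vector on an extreme ray is in this set.) *)
Definition extreme_ray (V : lmodType R) (C : set V) : set V :=
  [set d | C d /\ d != 0 /\ forall d1 d2, C d1 -> C d2 -> d = d1 + d2 ->
             (exists a : R, 0 <= a /\ d1 = a *: d) /\
             (exists b : R, 0 <= b /\ d2 = b *: d)].

Variables (n1 n2 m p q r : nat).
Variables (cx : 'cV[R]_n1) (I : {set 'I_n1})
  (A : 'M[R]_(m, n1)) (B : 'M[R]_(m, n2)) (b : 'cV[R]_m)
  (cy d : 'cV[R]_n2) (Gxy : 'M[R]_(p, n1)) (Gy : 'M[R]_(p, n2)) (hy : 'cV[R]_p)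
  (Kpsi : 'M[R]_(q, m)) (Ks : 'M[R]_(q, r)) (Kx : 'M[R]_(q, n1)) (k : 'cV[R]_q).

Definition Xset : set 'cV[R]_n1 :=
  [set x | nonneg x /\ forall i, i \in I -> x i 0 = 0 \/ x i 0 = 1].

Definition inner_feas (x : 'cV[R]_n1) (y : 'cV[R]_n2) (psi : 'cV[R]_m)
  (s : 'cV[R]_r) : Prop :=
  [/\ nonneg y, nonneg psi & nonneg s] /\
  [/\ lev (hy - Gxy *m x) (Gy *m y),
      lev (b - A *m x) (B *m y),
      lev (- d) (- (B^T *m psi)),
      0 <= - dot d y + dot psi b - dot s (ones r) &
      lev (k + Kx *m x) (Kpsi *m psi + Ks *m s)].

Definition fval (x : 'cV[R]_n1) : \bar R :=
  ereal_inf [set z | exists y psi s, inner_feas x y psi s /\ z = (dot cy y)%:E].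

Definition P1 : set ('cV[R]_n2 * 'cV[R]_q) :=
  [set yv | nonneg yv.1 /\ nonneg yv.2 /\
            lev b (B *m yv.1 - Kpsi^T *m yv.2) /\ lev (Ks^T *m yv.2) (ones r)].

Definition P2 : set ('cV[R]_m * 'cV[R]_p * R^o) :=
  [set t | nonneg t.1.1 /\ nonneg t.1.2 /\ 0 <= t.2 /\
           lev (B^T *m t.1.1 + Gy^T *m t.1.2) (t.2 *: d + cy)].

Definition J1 := extreme_point P1.
Definition R1 := extreme_ray (rec_cone P1).
Definition J2 := extreme_point P2.
Definition R2 := extreme_ray (rec_cone P2).

Definition mip_val : \bar R :=
  ereal_inf [set z | exists x, Xset x /\ z = (dot cx x)%:E + fval x].

Definition mip_opt (x : 'cV[R]_n1) : Prop :=
  Xset x /\ (fval x < +oo)%E /\ (dot cx x)%:E + fval x = mip_val.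

Definition lowgap (x : 'cV[R]_n1) (yv : 'cV[R]_n2 * 'cV[R]_q) : R :=
  dot d yv.1 - dot yv.2 (k + Kx *m x).

Definition dualterm (x : 'cV[R]_n1) (pu : 'cV[R]_m * 'cV[R]_p) : R :=
  dot pu.1 (b - A *m x) + dot pu.2 (hy - Gxy *m x).

Definition master_feas (x : 'cV[R]_n1) (t : R) : Prop :=
  [/\ Xset x,
      (forall j2 j1, J2 j2 -> J1 j1 ->
          t >= dualterm x j2.1 - j2.2 * lowgap x j1),
      (forall r1, R1 r1 -> lowgap x r1 >= 0),
      (forall r2, R2 r2 -> r2.2 = 0 -> 0 >= dualterm x r2.1) &
      (forall j1 r2, J1 j1 -> R2 r2 -> 0 < r2.2 ->
          0 >= dualterm x r2.1 - r2.2 * lowgap x j1)].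

Definition master_val : \bar R :=
  ereal_inf [set z | exists x t, master_feas x t /\ z = (dot cx x + t)%:E].

Definition master_opt (x : 'cV[R]_n1) : Prop :=
  exists t, master_feas x t /\ (dot cx x + t)%:E = master_val.

End Defs.

(* Main.v *)
Require Import Defs.
From HB Require Import structures.
From mathcomp Require Import all_boot all_order all_algebra.
From mathcomp Require Import all_classical all_reals ereal.
From mathcomp Require Import ring lra.
From Stdlib Require List.
Import Order.TTheory GRing.Theory Num.Theory.
Local Open Scope ring_scope.
Local Open Scope classical_set_scope.
Set Implicit Arguments. Unset Strict Implicit. Unset Printing Implicit Defensive.
Section FM.
Variable R : realType.
Variable V : finType.
Definition con := ((V -> R) * R)%type.
Definition sat (z : V -> R) (c : con) := c.2 <= \sum_v c.1 v * z v.

Inductive Deriv (S : seq con) : con -> Prop :=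
| D_in c : List.In c S -> Deriv S c
| D_triv be : be <= 0 -> Deriv S (fun _ => 0, be)
| D_add c1 c2 : Deriv S c1 -> Deriv S c2 ->
    Deriv S (fun v => c1.1 v + c2.1 v, c1.2 + c2.2)
| D_scale l c : 0 <= l -> Deriv S c -> Deriv S (fun v => l * c.1 v, l * c.2)
| D_weak a be be' : be' <= be -> Deriv S (a, be) -> Deriv S (a, be').

Lemma Deriv_mono S S' c : (forall c', List.In c' S' -> Deriv S c') ->
  Deriv S' c -> Deriv S c.
Proof.
move=> H; elim=> [c0 /H //|be hb|c1 c2 _ H1 _ H2|l c0 hl _ H1|a be be' hb _ H1].
- exact: D_triv.
- exact: D_add.
- exact: D_scale.
- exact: D_weak H1.
Qed.

Lemma sep_exists (L U : seq R) :
  (forall l u, List.In l L -> List.In u U -> l <= u) ->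
  exists x, (forall l, List.In l L -> l <= x) /\ (forall u, List.In u U -> x <= u).
Proof.
elim: L => [|l L IH] H.
  elim: U {H} => [|u U [x [_ hx]]]; first by exists 0.
  exists (if x <= u then x else u); split=> // u' /= [<-|hu'].
    by case: ifP => // /negbT; rewrite -ltNge => /ltW.
  by case: ifP => [_|/negbT]; [exact: hx|rewrite -ltNge => h; apply: le_trans (ltW h) (hx _ hu')].
have [x [hl hu]] : exists x, (forall l, List.In l L -> l <= x) /\ (forall u, List.In u U -> x <= u).
  by apply: IH => l' u hl' hu; apply: H => //=; right.
exists (if x <= l then l else x); split.
  move=> l' /= [<-|hl'].
    by case: ifP => // /negbT; rewrite -ltNge => /ltW.
  by case: ifP => [h|_]; [exact: le_trans (hl _ hl') h|exact: hl].
move=> u hu'; case: ifP => _; last exact: hu.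
by apply: H => //=; left.
Qed.

Definition comb (v0 : V) (p n : con) : con :=
  (fun v => (- n.1 v0) * p.1 v + p.1 v0 * n.1 v, (- n.1 v0) * p.2 + p.1 v0 * n.2).

Definition Zs v0 (S : seq con) := List.filter (fun c : con => c.1 v0 == 0) S.
Definition Ps v0 (S : seq con) := List.filter (fun c : con => 0 < c.1 v0) S.
Definition Ns v0 (S : seq con) := List.filter (fun c : con => c.1 v0 < 0) S.

Definition elim_v v0 S : seq con :=
  List.app (Zs v0 S) (List.flat_map (fun p => List.map (comb v0 p) (Ns v0 S)) (Ps v0 S)).

Lemma in_elim v0 S c : List.In c (elim_v v0 S) ->
  (List.In c S /\ c.1 v0 = 0) \/
  exists p n, [/\ List.In p S, List.In n S, 0 < p.1 v0, n.1 v0 < 0 & c = comb v0 p n].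
Proof.
case/List.in_app_iff => [/List.filter_In [h /eqP h2]|]; first by left.
case/List.in_flat_map => p [/List.filter_In [hp hp2]] /List.in_map_iff [n [<- /List.filter_In [hn hn2]]].
by right; exists p, n.
Qed.

Lemma elim_deriv v0 S c : List.In c (elim_v v0 S) -> Deriv S c.
Proof.
case/in_elim => [[h _]|[p [n [hp hn p0 n0 ->]]]]; first exact: D_in.
apply: (D_add (D_scale _ (D_in hp)) (D_scale _ (D_in hn))); [lra|lra].
Qed.

Lemma comb_in v0 S p n : List.In p S -> List.In n S -> 0 < p.1 v0 -> n.1 v0 < 0 ->
  List.In (comb v0 p n) (elim_v v0 S).
Proof.
move=> hp hn p0 n0; apply/List.in_app_iff; right; apply/List.in_flat_map.
exists p; split; first by apply/List.filter_In.
by apply/List.in_map_iff; exists n; split=> //; apply/List.filter_In.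
Qed.

Lemma sum_split_v0 (v0 : V) (f : V -> R) :
  \sum_v f v = f v0 + \sum_(v | v != v0) f v.
Proof. by rewrite (bigD1 v0). Qed.

Lemma fm (vs : seq V) : forall S : seq con,
  (forall c, List.In c S -> forall v, v \notin vs -> c.1 v = 0) ->
  (exists z, forall c, List.In c S -> sat z c) \/
  (exists a be, [/\ Deriv S (a, be), (forall v, a v = 0) & 0 < be]).
Proof.
elim: vs => [|v0 vs IH] S hS.
  have [[[a be] [hc hpos]]|hno] := boolp.pselect (exists c : con, List.In c S /\ 0 < c.2).
    right; exists a, be; split=> //; first exact: D_in.
    by move=> v; apply: (hS _ hc).
  left; exists (fun _ => 0) => c hc; rewrite /sat big1; last by move=> v _; rewrite mulr0.
  by rewrite leNgt; apply/negP => h; apply: hno; exists c.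
have hE : forall c, List.In c (elim_v v0 S) -> forall v, v \notin vs -> c.1 v = 0.
  move=> c /in_elim [[hc h0]|[p [n [hp hn p0 n0 ->]]]] v hv.
    by case: (eqVneq v v0) => [->//|hne]; apply: (hS _ hc); rewrite in_cons negb_or hne.
  rewrite /comb /=; case: (eqVneq v v0) => [->|hne]; first by ring.
  have hv' : v \notin v0 :: vs by rewrite in_cons negb_or hne.
  by rewrite (hS _ hp _ hv') (hS _ hn _ hv'); ring.
case: (IH _ hE) => [[z' hz']|[a [be [hd ha hb]]]]; last first.
  by right; exists a, be; split=> //; apply: Deriv_mono hd => c; apply: elim_deriv.
pose rest (c : con) := \sum_(v | v != v0) c.1 v * z' v.
have hdot : forall c : con, \sum_v c.1 v * z' v = c.1 v0 * z' v0 + rest c.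
  by move=> c; rewrite (sum_split_v0 v0).
pose L := List.map (fun p : con => (p.2 - rest p) / p.1 v0) (Ps v0 S).
pose U := List.map (fun n : con => (n.2 - rest n) / n.1 v0) (Ns v0 S).
have [x [hxl hxu]] : exists x, (forall l, List.In l L -> l <= x) /\ (forall u, List.In u U -> x <= u).
  apply: sep_exists => l u /List.in_map_iff [p [<- /List.filter_In [hp p0]]].
  move=> /List.in_map_iff [n [<- /List.filter_In [hn n0]]].
  have := hz' _ (comb_in hp hn p0 n0); rewrite /sat /comb /=.
  under eq_bigr do rewrite mulrDl -!mulrA.
  rewrite big_split /= -!mulr_sumr !hdot.
  set P := p.2 - rest p; set Nv := n.2 - rest n.
  have -> : p.2 = P + rest p by rewrite /P; ring.
  have -> : n.2 = Nv + rest n by rewrite /Nv; ring.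
  set q1 := P / p.1 v0; set q2 := Nv / n.1 v0.
  have -> : P = q1 * p.1 v0 by rewrite /q1 divfK // gt_eqF.
  have -> : Nv = q2 * n.1 v0 by rewrite /q2 divfK // lt_eqF.
  move=> h; have hk : 0 < p.1 v0 * - n.1 v0 by apply: mulr_gt0; lra.
  rewrite leNgt; apply/negP => hq.
  have h2 : 0 < q1 - q2 by rewrite subr_gt0.
  have := mulr_gt0 hk h2; lra.
left; exists (fun v => if v == v0 then x else z' v) => c hc.
have hdz : \sum_v c.1 v * (if v == v0 then x else z' v) = c.1 v0 * x + rest c.
  rewrite (sum_split_v0 v0) eqxx; congr (_ + _); apply: eq_bigr => v /negbTE -> //.
rewrite /sat hdz.
case: (ltrgtP (c.1 v0) 0) => h0.
- have : x <= (c.2 - rest c) / c.1 v0.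
    by apply: hxu; apply/List.in_map_iff; exists c; split=> //; apply/List.filter_In.
  set q := (c.2 - rest c) / c.1 v0.
  have e : c.2 = q * c.1 v0 + rest c by rewrite /q divfK ?lt_eqF //; ring.
  rewrite e => hq; nra.
- have : (c.2 - rest c) / c.1 v0 <= x.
    by apply: hxl; apply/List.in_map_iff; exists c; split=> //; apply/List.filter_In.
  set q := (c.2 - rest c) / c.1 v0.
  have e : c.2 = q * c.1 v0 + rest c by rewrite /q divfK ?gt_eqF //; ring.
  rewrite e => hq; nra.
- have hz : List.In c (elim_v v0 S) by apply/List.in_app_iff; left; apply/List.filter_In; rewrite h0 eqxx.
  have := hz' _ hz; rewrite /sat hdot h0 !mul0r //.
Qed.

Lemma In_mem (T : eqType) (x : T) (s : seq T) : x \in s -> List.In x s.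
Proof. elim: s => //= y s IH; rewrite in_cons => /orP [/eqP ->|/IH]; [by left|by right]. Qed.

Lemma deriv_comb (I : finType) (a : I -> V -> R) (be : I -> R) c :
  Deriv (List.map (fun i => (a i, be i)) (enum I)) c ->
  exists lam : I -> R, [/\ forall i, 0 <= lam i,
    forall v, c.1 v = \sum_i lam i * a i v & c.2 <= \sum_i lam i * be i].
Proof.
elim=> [c0 /List.in_map_iff [i [<- _]]|b0 hb|c1 c2 _ [l1 [h1 e1 f1]] _ [l2 [h2 e2 f2]]
       |l c0 hl _ [l1 [h1 e1 f1]]|a0 b0 b0' hb _ [l1 [h1 e1 f1]]].
- exists (fun j => if j == i then 1 else 0); split.
  + by move=> j; case: ifP.
  + by move=> v; rewrite (bigD1 i) //= eqxx mul1r big1 ?addr0 // => j /negbTE ->; rewrite mul0r.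
  + by rewrite (bigD1 i) //= eqxx mul1r big1 ?addr0 // => j /negbTE ->; rewrite mul0r.
- exists (fun _ => 0); split=> //=.
  + by move=> v; rewrite big1 // => i _; rewrite mul0r.
  + by rewrite big1 // => i _; rewrite mul0r.
- exists (fun i => l1 i + l2 i); split=> /=.
  + by move=> i; apply: addr_ge0.
  + by move=> v; rewrite e1 e2 -big_split /=; apply: eq_bigr => i _; rewrite mulrDl.
  + by under eq_bigr do rewrite mulrDl; rewrite big_split /=; apply: lerD.
- exists (fun i => l * l1 i); split=> /=.
  + by move=> i; apply: mulr_ge0.
  + by move=> v; rewrite e1 mulr_sumr; apply: eq_bigr => i _; rewrite mulrA.
  + under eq_bigr do rewrite -mulrA; rewrite -mulr_sumr; exact: ler_wpM2l.
- exists l1; split=> //; exact: le_trans f1.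
Qed.

Lemma farkas (I : finType) (a : I -> V -> R) (be : I -> R) :
  (exists z : V -> R, forall i, be i <= \sum_v a i v * z v) \/
  (exists lam : I -> R, [/\ forall i, 0 <= lam i,
     forall v, \sum_i lam i * a i v = 0 & 0 < \sum_i lam i * be i]).
Proof.
have := @fm (enum V) (List.map (fun i => (a i, be i)) (enum I)).
case.
- by move=> c _ v; rewrite mem_enum.
- move=> [z hz]; left; exists z => i; apply: (hz (a i, be i)).
  by apply: List.in_map; apply: In_mem; rewrite mem_enum.
- move=> [a0 [b0 [hd ha hb]]]; right.
  have [lam [h1 h2 h3]] := deriv_comb hd.
  exists lam; split=> //; last exact: lt_le_trans h3.
  by move=> v; rewrite -h2.
Qed.

End FM.
Section MW1.
Variable R : realType.
Variable V : lmodType R.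
Variable Ic : finType.
Variable a : Ic -> V -> R.
Variable be : Ic -> R.
Hypothesis aD : forall i x y, a i (x + y) = a i x + a i y.
Hypothesis aZ : forall i (l : R) x, a i (l *: x) = l * a i x.

Definition Pset := [set z : V | forall i, be i <= a i z].
Definition homog (d : V) := forall i, 0 <= a i d.
Definition nt (z : V) := #|[set i | be i < a i z]%SET|.

Lemma aB i x y : a i (x - y) = a i x - a i y.
Proof. by rewrite aD -scaleN1r aZ mulN1r. Qed.
Lemma aN i x : a i (- x) = - a i x.
Proof. by rewrite -scaleN1r aZ mulN1r. Qed.
Lemma a0 i : a i 0 = 0.
Proof. by rewrite -(scale0r 0) aZ mul0r. Qed.

Lemma step z d : Pset z -> (forall i, a i z = be i -> a i d = 0) ->
  (exists i, 0 < a i d) ->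
  exists s, [/\ 0 < s, Pset (z - s *: d) & (nt (z - s *: d) < nt z)%N].
Proof.
move=> hz ht [i0 hi0].
pose F i := (a i z - be i) / a i d.
case: (@arg_minP _ _ _ i0 (fun i => 0 < a i d) F hi0) => j hj hmin.
have hjt : be j < a j z.
  rewrite lt_neqAle hz andbT; apply/negP => /eqP e.
  by move: (ht j (esym e)) hj => ->; rewrite ltxx.
have hs : 0 < F j by apply: divr_gt0 => //; rewrite subr_gt0.
exists (F j); split=> //.
- move=> i; rewrite aB aZ.
  case: (ltP 0 (a i d)) => hi.
    have := hmin i hi; rewrite /F ler_pdivlMr // => h.
    have hzi := hz i; lra.
  have hzi := hz i; nra.
- apply: proper_card; apply/properP; split.
    apply/fintype.subsetP => i; rewrite !inE aB aZ => h.
    rewrite lt_neqAle hz andbT; apply/negP => /eqP e.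
    by move: h; rewrite (ht i (esym e)) mulr0 subr0 e ltxx.
  exists j; first by rewrite inE.
  rewrite inE aB aZ /F divfK ?gt_eqF //.
  by rewrite opprB addrC subrK ltxx.
Qed.

Lemma MWind (phi : V -> R) (alpha : R)
  (phiD : forall x y, phi (x + y) = phi x + phi y)
  (phiZ : forall (l : R) x, phi (l *: x) = l * phi x) :
  (forall d, (forall i, a i d = 0) -> d = 0) ->
  (forall e, extreme_point Pset e -> alpha <= phi e) ->
  (forall d, homog d -> 0 <= phi d) ->
  forall z, Pset z -> alpha <= phi z.
Proof.
move=> hpt hext hrec.
have phiB : forall x y, phi (x - y) = phi x - phi y.
  by move=> x y; rewrite phiD -scaleN1r phiZ mulN1r.
have phiN : forall x, phi (- x) = - phi x.
  by move=> x; rewrite -scaleN1r phiZ mulN1r.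
have key : forall z, Pset z -> (forall z', Pset z' -> (nt z' < nt z)%N -> alpha <= phi z') ->
    alpha <= phi z.
  move=> z hz IH.
  have oneside : forall d, homog d -> (exists i, 0 < a i d) ->
      (forall i, a i z = be i -> a i d = 0) -> alpha <= phi z.
    move=> d hd hex ht; have [s [hs hP hlt]] := step hz ht hex.
    have := IH _ hP hlt; rewrite phiB phiZ => h.
    have := hrec _ hd; nra.
  have [[y [w [l [hy hw hl0 hl1 [hzl hyw]]]]]|hno] := boolp.pselect (exists y w l,
      [/\ Pset y, Pset w, 0 < l, l < 1 & (z = l *: y + (1 - l) *: w /\ y != w)]); last first.
    apply: hext; split=> // y w hy hw l hl0 hl1 hzl.
    case: (eqVneq y w) => // hne; exfalso; apply: hno; exists y, w, l; split=> //.
  pose d := y - w.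
  have ht : forall i, a i z = be i -> a i d = 0.
    move=> i e; have hyi := hy i; have hwi := hw i.
    have : a i z = l * a i y + (1 - l) * a i w by rewrite hzl aD !aZ.
    rewrite e => h.
    have e1 : a i y = be i by nra.
    have e2 : a i w = be i by nra.
    by rewrite /d aB e1 e2 subrr.
  have htN : forall i, a i z = be i -> a i (- d) = 0.
    by move=> i e; rewrite aN ht // oppr0.
  have hd0 : d != 0 by rewrite /d subr_eq0.
  have [[i1 hi1]|hnp] := boolp.pselect (exists i, 0 < a i d);
  have [[i2 hi2]|hnn] := boolp.pselect (exists i, a i d < 0).
  - have [s1 [hs1 hP1 hlt1]] := step hz ht (ex_intro _ i1 hi1).
    have hi2' : 0 < a i2 (- d) by rewrite aN oppr_gt0.
    have [s2 [hs2 hP2 hlt2]] := step hz htN (ex_intro _ i2 hi2').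
    have := IH _ hP1 hlt1; have := IH _ hP2 hlt2.
    rewrite !phiB !phiZ phiN => h2 h1; nra.
  - apply: (oneside d _ (ex_intro _ i1 hi1) ht) => i.
    by rewrite leNgt; apply/negP => hh; apply: hnn; exists i.
  - apply: (oneside (- d) _ (ex_intro _ i2 _) htN); last by rewrite aN oppr_gt0.
    by move=> k; rewrite aN oppr_ge0 leNgt; apply/negP => h; apply: hnp; exists k.
  - exfalso; move/negP: hd0; apply; apply/eqP; apply: hpt => i.
    apply/eqP; rewrite eq_le; apply/andP; split.
      by rewrite leNgt; apply/negP => hh; apply: hnp; exists i.
    by rewrite leNgt; apply/negP => hh; apply: hnn; exists i.
suff H : forall n z, (nt z <= n)%N -> Pset z -> alpha <= phi z.
  by move=> z; apply: (H (nt z)).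
elim=> [|n IH] z hn hz; apply: key => // z' hz' hlt; last by apply: IH => //; rewrite -ltnS (leq_trans hlt hn).
by move: hn; rewrite leqn0 => /eqP e; rewrite e in hlt.
Qed.

Lemma rec_homog r : Pset !=set0 -> (rec_cone Pset r <-> homog r).
Proof.
move=> [x hx]; split.
  move=> hr i; rewrite leNgt; apply/negP => hneg.
  have hxi := hx i.
  pose l := (a i x - be i + 1) / (- a i r).
  have hl : 0 <= l by apply: divr_ge0; lra.
  have := hr x hx l hl i; rewrite aD aZ.
  have : l * a i r = - (a i x - be i + 1).
    by rewrite /l; field; rewrite ?oppr_eq0 lt_eqF.
  lra.
move=> hr y hy l hl i; rewrite aD aZ; have := hy i; have := hr i; nra.
Qed.

End MW1.
Section MW2.
Variable R : realType.
Variable V : lmodType R.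
Variable Ic : finType.
Variable a : Ic -> V -> R.
Variable be : Ic -> R.
Hypothesis aD : forall i x y, a i (x + y) = a i x + a i y.
Hypothesis aZ : forall i (l : R) x, a i (l *: x) = l * a i x.
Variable sig : V -> R.
Hypothesis sD : forall x y, sig (x + y) = sig x + sig y.
Hypothesis sZ : forall (l : R) x, sig (l *: x) = l * sig x.
Hypothesis hsig : forall d, homog a d -> 0 <= sig d /\ (sig d = 0 -> d = 0).
Hypothesis hne : Pset a be !=set0.

Lemma sN x : sig (- x) = - sig x.
Proof. by rewrite -scaleN1r sZ mulN1r. Qed.

Lemma pointed d : (forall i, a i d = 0) -> d = 0.
Proof.
move=> h; have h1 : homog a d by move=> i; rewrite h.
have h2 : homog a (- d) by move=> i; rewrite (aN aZ) h oppr0.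
have [g1 e1] := hsig h1; have [g2 _] := hsig h2.
by apply: e1; move: g2; rewrite sN; lra.
Qed.

Definition aQ (j : Ic + bool) : V -> R :=
  match j with inl i => a i | inr true => sig | inr false => fun z => - sig z end.
Definition bQ (j : Ic + bool) : R :=
  match j with inl _ => 0 | inr true => 1 | inr false => -1 end.

Lemma aQD j x y : aQ j (x + y) = aQ j x + aQ j y.
Proof. by case: j => [i|[]] /=; rewrite ?aD ?sD // opprD. Qed.
Lemma aQZ j (l : R) x : aQ j (l *: x) = l * aQ j x.
Proof. by case: j => [i|[]] /=; rewrite ?aZ ?sZ // mulrN. Qed.

Lemma inQ e : Pset aQ bQ e <-> homog a e /\ sig e = 1.
Proof.
split.
  move=> h; split; first by move=> i; exact: (h (inl i)).
  have := h (inr true); have := h (inr false); rewrite /= => h1 h2; lra.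
move=> [h1 h2] [i|[]] /=; rewrite ?h2 //; exact: h1.
Qed.

Lemma normQ d : homog a d -> 0 < sig d -> Pset aQ bQ ((sig d)^-1 *: d).
Proof.
move=> hd hs; apply/inQ; split.
  by move=> i; rewrite aZ; apply: mulr_ge0; [rewrite invr_ge0 ltW|exact: hd].
by rewrite sZ mulVf // gt_eqF.
Qed.

Lemma extQ_ray e : extreme_point (Pset aQ bQ) e -> extreme_ray (rec_cone (Pset a be)) e.
Proof.
move=> [heQ hext]; have [he hse] := (inQ e).1 heQ.
split; first by apply/(rec_homog aD aZ _ hne).
split.
  by apply/eqP => e0; move: hse; rewrite e0 -(scale0r 0) sZ mul0r => /eqP; rewrite eq_sym oner_eq0.
move=> d1 d2 /(rec_homog aD aZ _ hne) h1 /(rec_homog aD aZ _ hne) h2 ed.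
have [g1 z1] := hsig h1; have [g2 z2] := hsig h2.
have hs : sig d1 + sig d2 = 1 by rewrite -sD -ed.
have [s10|s1p] := eqVneq (sig d1) 0.
  have d10 := z1 s10; split; first by exists 0; rewrite d10 scale0r.
  by exists 1; split=> //; rewrite scale1r ed d10 add0r.
have [s20|s2p] := eqVneq (sig d2) 0.
  have d20 := z2 s20; split; last by exists 0; rewrite d20 scale0r.
  by exists 1; split=> //; rewrite scale1r ed d20 addr0.
have g1' : 0 < sig d1 by rewrite lt_neqAle eq_sym s1p g1.
have g2' : 0 < sig d2 by rewrite lt_neqAle eq_sym s2p g2.
have hy := normQ h1 g1'; have hw := normQ h2 g2'.
have e1 : 1 - sig d1 = sig d2 by lra.
have hyw : (sig d1)^-1 *: d1 = (sig d2)^-1 *: d2.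
  apply: (hext _ _ hy hw (sig d1)) => //; first lra.
  by rewrite e1 !scalerA !mulfV ?gt_eqF // !scale1r.
have hd1 : d1 = sig d1 *: ((sig d1)^-1 *: d1) by rewrite scalerA mulfV ?gt_eqF // scale1r.
have hd2 : d2 = sig d2 *: ((sig d1)^-1 *: d1) by rewrite hyw scalerA mulfV ?gt_eqF // scale1r.
have ee : e = (sig d1)^-1 *: d1.
  by rewrite ed {1}hd1 {1}hd2 -scalerDl hs scale1r.
split.
  by exists (sig d1); split=> //; rewrite ee scalerA mulfV ?gt_eqF // scale1r.
by exists (sig d2); split=> //; rewrite ee hyw scalerA mulfV ?gt_eqF // scale1r.
Qed.

Lemma cone_bound (phi : V -> R)
  (phiD : forall x y, phi (x + y) = phi x + phi y)
  (phiZ : forall (l : R) x, phi (l *: x) = l * phi x) :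
  (forall r, extreme_ray (rec_cone (Pset a be)) r -> 0 <= phi r) ->
  forall r, homog a r -> 0 <= phi r.
Proof.
move=> hray r hr.
have phi0 : phi 0 = 0 by rewrite -(scale0r 0) phiZ mul0r.
have [g z] := hsig hr.
have [s0|sp] := eqVneq (sig r) 0; first by rewrite (z s0) phi0.
have g' : 0 < sig r by rewrite lt_neqAle eq_sym sp g.
have hQ := normQ hr g'.
have : 0 <= phi ((sig r)^-1 *: r).
  apply: (MWind aQD aQZ phiD phiZ _ _ _ hQ).
  - move=> d hd; apply: pointed => i; exact: (hd (inl i)).
  - by move=> e he; apply: hray; apply: extQ_ray.
  - move=> d hd.
    have hda : homog a d by move=> i; exact: (hd (inl i)).
    have := hd (inr true); have := hd (inr false); rewrite /= => h1 h2.
    have [_ zd] := hsig hda.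
    by rewrite zd ?phi0 //; lra.
rewrite phiZ => h.
by rewrite pmulr_rge0 ?invr_gt0 in h.
Qed.

Theorem mw_bound (phi : V -> R) (alpha : R)
  (phiD : forall x y, phi (x + y) = phi x + phi y)
  (phiZ : forall (l : R) x, phi (l *: x) = l * phi x) :
  (forall e, extreme_point (Pset a be) e -> alpha <= phi e) ->
  (forall r, extreme_ray (rec_cone (Pset a be)) r -> 0 <= phi r) ->
  forall z, Pset a be z -> alpha <= phi z.
Proof.
move=> hext hray; apply: (MWind aD aZ phiD phiZ pointed hext).
exact: cone_bound.
Qed.

End MW2.
Section DotLemmas.
Variable R : realType.

Lemma sum_unit (F : unit -> R) : \sum_(u : unit) F u = F tt.
Proof. by rewrite (bigD1 tt) //= big_pred0 ?addr0 // => -[]. Qed.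

Lemma dotC n (u v : 'cV[R]_n) : dot u v = dot v u.
Proof. by apply: eq_bigr => i _; rewrite mulrC. Qed.
Lemma dotDl n (u v w : 'cV[R]_n) : dot (u + v) w = dot u w + dot v w.
Proof. by rewrite /dot -big_split; apply: eq_bigr => i _; rewrite !mxE mulrDl. Qed.
Lemma dotDr n (u v w : 'cV[R]_n) : dot w (u + v) = dot w u + dot w v.
Proof. by rewrite /dot -big_split; apply: eq_bigr => i _; rewrite !mxE mulrDr. Qed.
Lemma dotZl n (l : R) (u v : 'cV[R]_n) : dot (l *: u) v = l * dot u v.
Proof. by rewrite /dot mulr_sumr; apply: eq_bigr => i _; rewrite !mxE mulrA. Qed.
Lemma dotZr n (l : R) (u v : 'cV[R]_n) : dot u (l *: v) = l * dot u v.
Proof. by rewrite /dot mulr_sumr; apply: eq_bigr => i _; rewrite !mxE mulrCA. Qed.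
Lemma dotNl n (u v : 'cV[R]_n) : dot (- u) v = - dot u v.
Proof. by rewrite -scaleN1r dotZl mulN1r. Qed.
Lemma dotNr n (u v : 'cV[R]_n) : dot u (- v) = - dot u v.
Proof. by rewrite -scaleN1r dotZr mulN1r. Qed.
Lemma dotBl n (u v w : 'cV[R]_n) : dot (u - v) w = dot u w - dot v w.
Proof. by rewrite dotDl dotNl. Qed.
Lemma dotBr n (u v w : 'cV[R]_n) : dot w (u - v) = dot w u - dot w v.
Proof. by rewrite dotDr dotNr. Qed.
Lemma dot0l n (v : 'cV[R]_n) : dot 0 v = 0.
Proof. by rewrite /dot big1 // => i _; rewrite mxE mul0r. Qed.
Lemma dot0r n (v : 'cV[R]_n) : dot v 0 = 0.
Proof. by rewrite /dot big1 // => i _; rewrite mxE mulr0. Qed.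

Lemma dot_mul n1 n2 (u : 'cV[R]_n1) (M : 'M[R]_(n1, n2)) (v : 'cV[R]_n2) :
  dot u (M *m v) = dot (M^T *m u) v.
Proof.
rewrite /dot.
under eq_bigr do rewrite !mxE big_distrr /=.
under [RHS]eq_bigr do rewrite !mxE big_distrl /=.
rewrite exchange_big; apply: eq_bigr => j _; apply: eq_bigr => i _.
by rewrite !mxE mulrCA mulrA.
Qed.

Lemma dot_ler n (w u v : 'cV[R]_n) : nonneg w -> lev u v -> dot w u <= dot w v.
Proof.
move=> hw huv; apply: ler_sum => i _; apply: ler_wpM2l; last exact: huv.
by have := hw i; rewrite mxE.
Qed.
Lemma dot_lel n (w u v : 'cV[R]_n) : nonneg w -> lev u v -> dot u w <= dot v w.
Proof. by move=> hw huv; rewrite (dotC u) (dotC v); apply: dot_ler. Qed.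

Lemma nonnegE n (u : 'cV[R]_n) : nonneg u <-> forall i, 0 <= u i 0.
Proof. by split=> h i; have := h i; rewrite mxE. Qed.

Lemma cV_eq0 n (u : 'cV[R]_n) : (forall i, u i 0 = 0) -> u = 0.
Proof. by move=> h; apply/matrixP => i j; rewrite (ord1 j) mxE h. Qed.

Lemma sum_ge0_eq0 n (u : 'cV[R]_n) : (forall i, 0 <= u i 0) -> \sum_i u i 0 = 0 -> u = 0.
Proof.
move=> h s0; apply: cV_eq0 => i.
by apply: (psumr_eq0P (P := predT) (fun i _ => h i) s0).
Qed.

Lemma sum_ge0' n (u : 'cV[R]_n) : (forall i, 0 <= u i 0) -> 0 <= \sum_i u i 0.
Proof. by move=> h; apply: sumr_ge0 => i _. Qed.

End DotLemmas.
Section App.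
Variables (R : realType) (n1 n2 m p q r : nat).
Variables (cx : 'cV[R]_n1) (Iset : {set 'I_n1})
  (A : 'M[R]_(m, n1)) (B : 'M[R]_(m, n2)) (b : 'cV[R]_m)
  (cy d : 'cV[R]_n2) (Gxy : 'M[R]_(p, n1)) (Gy : 'M[R]_(p, n2)) (hy : 'cV[R]_p)
  (Kpsi : 'M[R]_(q, m)) (Ks : 'M[R]_(q, r)) (Kx : 'M[R]_(q, n1)) (k : 'cV[R]_q).

Definition I1 := ((('I_n2 + 'I_q) + 'I_m) + 'I_r)%type.
Definition a1 (j : I1) (z : 'cV[R]_n2 * 'cV[R]_q) : R :=
  match j with
  | inl (inl (inl i)) => z.1 i 0
  | inl (inl (inr i)) => z.2 i 0
  | inl (inr i) => (B *m z.1 - Kpsi^T *m z.2) i 0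
  | inr i => - (Ks^T *m z.2) i 0
  end.
Definition b1 (j : I1) : R :=
  match j with inl (inr i) => b i 0 | inr _ => -1 | _ => 0 end.

Lemma a1D j x y : a1 j (x + y) = a1 j x + a1 j y.
Proof.
by case: j => [[[i|i]|i]|i] /=; rewrite ?mulmxDr !mxE //; ring.
Qed.
Lemma a1Z j (l : R) x : a1 j (l *: x) = l * a1 j x.
Proof.
have e1 : (l *: x).1 = l *: x.1 := erefl. have e2 : (l *: x).2 = l *: x.2 := erefl.
by case: j => [[[i|i]|i]|i]; rewrite /a1 ?e1 ?e2 -?scalemxAr !mxE //; ring.
Qed.

Lemma P1E : P1 B b Kpsi Ks = Pset a1 b1.
Proof.
apply: boolp.funext => z; apply: boolp.propext; split.
  move=> [h1 [h2 [h3 h4]]] [[[i|i]|i]|i] /=.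
  - by have := h1 i; rewrite mxE.
  - by have := h2 i; rewrite mxE.
  - exact: h3.
  - have e : ones R r i 0 = 1 by rewrite mxE.
    by have := h4 i; rewrite e /=; lra.
move=> h; split; [|split; [|split]].
- by move=> i; rewrite mxE; exact: (h (inl (inl (inl i)))).
- by move=> i; rewrite mxE; exact: (h (inl (inl (inr i)))).
- by move=> i; exact: (h (inl (inr i))).
- move=> i; have e : ones R r i 0 = 1 by rewrite mxE.
  by rewrite e; have := h (inr i); rewrite /=; lra.
Qed.

Definition sig1 (z : 'cV[R]_n2 * 'cV[R]_q) : R := \sum_i z.1 i 0 + \sum_i z.2 i 0.
Lemma sig1D x y : sig1 (x + y) = sig1 x + sig1 y.
Proof.
rewrite /sig1 /=.
under eq_bigr do rewrite mxE. under [X in _ + X = _]eq_bigr do rewrite mxE.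
by rewrite !big_split /=; ring.
Qed.
Lemma sig1Z (l : R) x : sig1 (l *: x) = l * sig1 x.
Proof.
rewrite /sig1 /= mulrDr !mulr_sumr.
by congr (_ + _); apply: eq_bigr => i _; rewrite mxE.
Qed.
Lemma hsig1 z : homog a1 z -> 0 <= sig1 z /\ (sig1 z = 0 -> z = 0).
Proof.
case: z => z1 z2 h.
have g1 : forall i, 0 <= z1 i 0 by move=> i; exact: (h (inl (inl (inl i)))).
have g2 : forall i, 0 <= z2 i 0 by move=> i; exact: (h (inl (inl (inr i)))).
have s1 := sum_ge0' g1; have s2 := sum_ge0' g2.
split; first by rewrite /sig1 /=; lra.
rewrite /sig1 /= => e.
have e1 : \sum_i z1 i 0 = 0 by lra.
have e2 : \sum_i z2 i 0 = 0 by lra.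
by rewrite (sum_ge0_eq0 g1 e1) (sum_ge0_eq0 g2 e2).
Qed.

Definition I2 := ((('I_m + 'I_p) + unit) + 'I_n2)%type.
Definition a2 (j : I2) (t : 'cV[R]_m * 'cV[R]_p * R^o) : R :=
  match j with
  | inl (inl (inl i)) => t.1.1 i 0
  | inl (inl (inr i)) => t.1.2 i 0
  | inl (inr _) => t.2
  | inr i => (t.2 *: d - (B^T *m t.1.1 + Gy^T *m t.1.2)) i 0
  end.
Definition b2 (j : I2) : R := match j with inr i => - cy i 0 | _ => 0 end.

Lemma a2D j x y : a2 j (x + y) = a2 j x + a2 j y.
Proof.
by case: j => [[[i|i]|i]|i] /=; rewrite ?mulmxDr ?scalerDl ?mxE //; ring.
Qed.
Lemma a2Z j (l : R) x : a2 j (l *: x) = l * a2 j x.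
Proof.
have e1 : (l *: x).1.1 = l *: x.1.1 := erefl. have e2 : (l *: x).1.2 = l *: x.1.2 := erefl.
have e3 : (l *: x).2 = l * x.2 := erefl.
by case: j => [[[i|i]|i]|i]; rewrite /a2 ?e1 ?e2 ?e3 -?scalemxAr ?mxE //; ring.
Qed.

Lemma P2E : P2 B cy d Gy = Pset a2 b2.
Proof.
apply: boolp.funext => z; apply: boolp.propext; split.
  move=> [h1 [h2 [h3 h4]]] [[[i|i]|i]|i] /=.
  - by have := h1 i; rewrite mxE.
  - by have := h2 i; rewrite mxE.
  - exact: h3.
  - by have := h4 i; rewrite !mxE; lra.
move=> h; split; [|split; [|split]].
- by move=> i; rewrite mxE; exact: (h (inl (inl (inl i)))).
- by move=> i; rewrite mxE; exact: (h (inl (inl (inr i)))).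
- exact: (h (inl (inr tt))).
- by move=> i; have := h (inr i); rewrite /= !mxE; lra.
Qed.

Definition sig2 (t : 'cV[R]_m * 'cV[R]_p * R^o) : R :=
  \sum_i t.1.1 i 0 + \sum_i t.1.2 i 0 + t.2.
Lemma sig2D x y : sig2 (x + y) = sig2 x + sig2 y.
Proof.
rewrite /sig2 /=.
under eq_bigr do rewrite mxE. under [X in _ + X + _ = _]eq_bigr do rewrite mxE.
by rewrite !big_split /=; ring.
Qed.
Lemma sig2Z (l : R) x : sig2 (l *: x) = l * sig2 x.
Proof.
rewrite /sig2 /= !mulrDr !mulr_sumr.
by congr (_ + _ + _); apply: eq_bigr => i _; rewrite mxE.
Qed.
Lemma hsig2 z : homog a2 z -> 0 <= sig2 z /\ (sig2 z = 0 -> z = 0).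
Proof.
case: z => [[z1 z2] w] h.
have g1 : forall i, 0 <= z1 i 0 by move=> i; exact: (h (inl (inl (inl i)))).
have g2 : forall i, 0 <= z2 i 0 by move=> i; exact: (h (inl (inl (inr i)))).
have g3 : 0 <= w by exact: (h (inl (inr tt))).
have s1 := sum_ge0' g1; have s2 := sum_ge0' g2.
split; first by rewrite /sig2 /=; lra.
rewrite /sig2 /= => e.
have e1 : \sum_i z1 i 0 = 0 by lra.
have e2 : \sum_i z2 i 0 = 0 by lra.
have e3 : w = 0 by lra.
by rewrite (sum_ge0_eq0 g1 e1) (sum_ge0_eq0 g2 e2) e3.
Qed.


Local Notation IF := (inner_feas A B b d Gxy Gy hy Kpsi Ks Kx k).
Local Notation LG := (lowgap d Kx k).
Local Notation DT := (dualterm A b Gxy hy).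

Lemma lev_sub n (u v w : 'cV[R]_n) : lev u (v - w) -> lev w (v - u).
Proof. by move=> h i; have := h i; rewrite !mxE; lra. Qed.

Lemma WD x y ps s (ps' : 'cV[R]_m) (u : 'cV[R]_p) (w th : R) (y' : 'cV[R]_n2) (v : 'cV[R]_q) :
  IF x y ps s -> nonneg ps' -> nonneg u -> 0 <= w -> 0 <= th ->
  lev (B^T *m ps' + Gy^T *m u) (w *: d + th *: cy) -> nonneg y' -> nonneg v ->
  lev (w *: b) (B *m y' - Kpsi^T *m v) -> lev (Ks^T *m v) (w *: ones R r) ->
  DT x (ps', u) - LG x (y', v) <= th * dot cy y.
Proof.
move=> [[hy0 hps hs] [c1 c2 c3 c4 c5]] hps' hu hw hth hP2 hy' hv hK1 hK2.
rewrite /dualterm /lowgap /=.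
have i1 := dot_ler hps' c2.
have i2 := dot_ler hu c1.
have i3 := dot_lel hy0 hP2.
rewrite !dotDl !dotZl -!dot_mul in i3.
have i4 := dot_ler hv c5.
have e4 : dot v (Kpsi *m ps + Ks *m s) = dot (Kpsi^T *m v) ps + dot (Ks^T *m v) s.
  by rewrite dotDr !dot_mul.
rewrite e4 in i4.
have i5 := dot_lel hps (lev_sub hK1).
rewrite dotBl dotZl [dot (B *m y') ps]dotC dot_mul in i5.
have i6 := dot_lel hs hK2; rewrite dotZl in i6.
have c3' : lev (B^T *m ps) d by move=> i; have := c3 i; rewrite !mxE; lra.
have i8 := dot_ler hy' c3'.
have i9 : 0 <= w * (- dot d y + dot ps b - dot s (ones R r)) by apply: mulr_ge0.
rewrite (dotC (B^T *m ps)) in i5.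
rewrite (dotC y' d) (dotC ps b) (dotC s) in i8 i9 *.
move: i1 i2 i3 i4 i5 i6 i8 i9.
set X1 := dot ps' (B *m y); set X2 := dot u (Gy *m y).
set X3 := dot y' (B^T *m ps).
move=> i1 i2 i3 i4 i5 i6 i8 i9.
rewrite mulrDr mulrDr mulrN mulrN in i9.
lra.
Qed.

Local Notation J1s := (J1 B b Kpsi Ks).
Local Notation R1s := (R1 B b Kpsi Ks).
Local Notation J2s := (J2 B cy d Gy).
Local Notation R2s := (R2 B cy d Gy).

Definition Ca x t := forall j2 j1, J2s j2 -> J1s j1 -> DT x j2.1 - j2.2 * LG x j1 <= t.
Definition Cb x := forall r1, R1s r1 -> 0 <= LG x r1.
Definition Cc x := forall r2, R2s r2 -> r2.2 = 0 -> DT x r2.1 <= 0.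
Definition Cd x := forall j1 r2, J1s j1 -> R2s r2 -> 0 < r2.2 ->
  DT x r2.1 - r2.2 * LG x j1 <= 0.

Hypothesis hP1 : P1 B b Kpsi Ks !=set0.
Hypothesis hP2 : P2 B cy d Gy !=set0.

Lemma hne1 : Pset a1 b1 !=set0. Proof. by rewrite -P1E. Qed.
Lemma hne2 : Pset a2 b2 !=set0. Proof. by rewrite -P2E. Qed.

Lemma LG_D x z1 z2 : LG x (z1 + z2) = LG x z1 + LG x z2.
Proof. by rewrite /lowgap /= dotDr dotDl; ring. Qed.
Lemma LG_Z x (l : R) z : LG x (l *: z) = l * LG x z.
Proof.
have e1 : (l *: z).1 = l *: z.1 := erefl. have e2 : (l *: z).2 = l *: z.2 := erefl.
by rewrite /lowgap e1 e2 dotZr dotZl; ring.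
Qed.

Definition F2 x e (z : 'cV[R]_m * 'cV[R]_p * R^o) : R := DT x z.1 - z.2 * LG x e.
Lemma F2_D x e z1 z2 : F2 x e (z1 + z2) = F2 x e z1 + F2 x e z2.
Proof. by rewrite /F2 /dualterm /= !dotDl; ring. Qed.
Lemma F2_Z x e (l : R) z : F2 x e (l *: z) = l * F2 x e z.
Proof.
have e1 : (l *: z).1.1 = l *: z.1.1 := erefl. have e2 : (l *: z).1.2 = l *: z.1.2 := erefl.
have e3 : (l *: z).2 = l * z.2 := erefl.
by rewrite /F2 /dualterm e1 e2 e3 !dotZl; ring.
Qed.

Lemma J1_ne : exists e, J1s e.
Proof.
have [//|hno] := boolp.pselect (exists e, J1s e).
have [z hz] := hne1.
suff : (1:R) <= 0 by rewrite ler10.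
apply: (@mw_bound _ _ _ a1 b1 a1D a1Z sig1 sig1D sig1Z hsig1 hne1 (fun _ => 0) 1 _ _ _ _ z hz).
- by move=> *; rewrite addr0.
- by move=> *; rewrite mulr0.
- by move=> e he; exfalso; apply: hno; exists e; rewrite /J1 P1E.
- by [].
Qed.

Lemma P1_bound x : Cb x -> forall alpha, (forall e, J1s e -> alpha <= LG x e) ->
  forall z, Pset a1 b1 z -> alpha <= LG x z.
Proof.
move=> hb alpha he.
apply: (@mw_bound _ _ _ a1 b1 a1D a1Z sig1 sig1D sig1Z hsig1 hne1 (LG x) alpha (LG_D x) (LG_Z x)).
  by move=> e h; apply: he; rewrite /J1 P1E.
by move=> r0 h; apply: hb; rewrite /R1 P1E.
Qed.

Lemma P1_cone x : Cb x -> forall z, homog a1 z -> 0 <= LG x z.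
Proof.
move=> hb.
apply: (@cone_bound _ _ _ a1 b1 a1D a1Z sig1 sig1D sig1Z hsig1 hne1 (LG x) (LG_D x) (LG_Z x)).
by move=> r0 h; apply: hb; rewrite /R1 P1E.
Qed.

Lemma R2_w r0 : R2s r0 -> 0 <= r0.2.
Proof.
rewrite /R2 P2E => -[h _].
by have := (rec_homog a2D a2Z r0 hne2).1 h (inl (inr tt)).
Qed.

Lemma F2_ray x e : J1s e -> Cc x -> Cd x -> forall r0, R2s r0 -> 0 <= - F2 x e r0.
Proof.
move=> he hc hd r0 hr; rewrite oppr_ge0 /F2.
have := R2_w hr; rewrite le_eqVlt => /orP [/eqP e0|hpos].
  by rewrite -e0 mul0r subr0; apply: hc.
exact: hd.
Qed.

Lemma P2_bound x e t : J1s e -> Cc x -> Cd x -> Ca x t ->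
  forall z, Pset a2 b2 z -> F2 x e z <= t.
Proof.
move=> he hc hd ha z hz.
have phiD : forall z1 z2, - F2 x e (z1 + z2) = - F2 x e z1 + - F2 x e z2.
  by move=> z1 z2; rewrite F2_D opprD.
have phiZ : forall (l : R) z, - F2 x e (l *: z) = l * - F2 x e z.
  by move=> l z0; rewrite F2_Z mulrN.
have := @mw_bound _ _ _ a2 b2 a2D a2Z sig2 sig2D sig2Z hsig2 hne2 (fun z => - F2 x e z) (- t)
  phiD phiZ _ _ z hz.
rewrite lerN2; apply.
  by move=> j hj; rewrite lerN2; apply: ha => //; rewrite /J2 P2E.
by move=> r0 hr; apply: (F2_ray he hc hd); rewrite /R2 P2E.
Qed.

Lemma P2_cone x e : J1s e -> Cc x -> Cd x ->
  forall z, homog a2 z -> F2 x e z <= 0.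
Proof.
move=> he hc hd z hz.
have phiD : forall z1 z2, - F2 x e (z1 + z2) = - F2 x e z1 + - F2 x e z2.
  by move=> z1 z2; rewrite F2_D opprD.
have phiZ : forall (l : R) z, - F2 x e (l *: z) = l * - F2 x e z.
  by move=> l z0; rewrite F2_Z mulrN.
have := @cone_bound _ _ _ a2 b2 a2D a2Z sig2 sig2D sig2Z hsig2 hne2 (fun z => - F2 x e z)
  phiD phiZ _ z hz.
rewrite oppr_ge0; apply.
by move=> r0 hr; apply: (F2_ray he hc hd); rewrite /R2 P2E.
Qed.

Lemma UB x t (nu : R) (z2 : 'cV[R]_m * 'cV[R]_p * R^o) (z1 : 'cV[R]_n2 * 'cV[R]_q) :
  Cb x -> Cc x -> Cd x -> 0 <= nu -> (0 < nu -> Ca x t) ->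
  (forall j, nu * b2 j <= a2 j z2) -> (forall j, z2.2 * b1 j <= a1 j z1) ->
  DT x z2.1 - LG x z1 <= nu * t.
Proof.
move=> hb hc hd hnu hca h2 h1.
have hw : 0 <= z2.2 by have := h2 (inl (inr tt)); rewrite /= mulr0.
have claim : forall e, J1s e -> F2 x e z2 <= nu * t.
  move=> e he; have [nu0|nup] := eqVneq nu 0.
    rewrite nu0 mul0r; apply: (P2_cone he hc hd) => j.
    by have := h2 j; rewrite nu0 mul0r.
  have nug : 0 < nu by rewrite lt_neqAle eq_sym nup hnu.
  have hz : Pset a2 b2 (nu^-1 *: z2).
    move=> j; rewrite a2Z; have := h2 j => h.
    rewrite -(mulKf nup (b2 j)) ler_pM2l ?invr_gt0 //.
  have := P2_bound he hc hd (hca nug) hz; rewrite F2_Z => h.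
  have h' := ler_wpM2l (ltW nug) h.
  by rewrite mulrA mulfV ?mul1r in h'.
have [e0 he0] := J1_ne.
have [w0|wp] := eqVneq z2.2 0.
  have hz1 : homog a1 z1 by move=> j; have := h1 j; rewrite w0 mul0r.
  have := P1_cone hb hz1; have := claim e0 he0; rewrite /F2 w0 mul0r; lra.
have wg : 0 < z2.2 by rewrite lt_neqAle eq_sym wp hw.
have hz : Pset a1 b1 (z2.2^-1 *: z1).
  move=> j; rewrite a1Z; have := h1 j => h.
  by rewrite -(mulKf wp (b1 j)) ler_pM2l ?invr_gt0.
have key : (DT x z2.1 - nu * t) / z2.2 <= LG x (z2.2^-1 *: z1).
  apply: (P1_bound hb) hz => e he.
  rewrite ler_pdivrMr //; have := claim e he; rewrite /F2; lra.
rewrite LG_Z ler_pdivrMr // mulrAC mulVf ?mul1r // in key; lra.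
Qed.

Definition Vt := (('I_n2 + 'I_m) + 'I_r)%type.
Definition Ic := ((((('I_p + 'I_m) + 'I_n2) + unit) + 'I_q) + Vt + unit)%type.

Definition coef (th : R) (c : Ic) (v : Vt) : R :=
  match c, v with
  | inl (inl (inl (inl (inl (inl j))))), inl (inl jy) => Gy j jy
  | inl (inl (inl (inl (inl (inr i))))), inl (inl jy) => B i jy
  | inl (inl (inl (inl (inr j)))), inl (inr i) => - B i j
  | inl (inl (inl (inr _))), inl (inl jy) => - d jy 0
  | inl (inl (inl (inr _))), inl (inr i) => b i 0
  | inl (inl (inl (inr _))), inr _ => -1
  | inl (inl (inr j)), inl (inr i) => Kpsi j i
  | inl (inl (inr j)), inr l => Ks j l
  | inl (inr v0), v => if v == v0 then 1 else 0
  | inr _, inl (inl jy) => - th * cy jy 0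
  | _, _ => 0
  end.

Definition rhs x (t : R) (c : Ic) : R :=
  match c with
  | inl (inl (inl (inl (inl (inl j))))) => (hy - Gxy *m x) j 0
  | inl (inl (inl (inl (inl (inr i))))) => (b - A *m x) i 0
  | inl (inl (inl (inl (inr j)))) => - d j 0
  | inl (inl (inl (inr _))) => 0
  | inl (inl (inr j)) => (k + Kx *m x) j 0
  | inl (inr _) => 0
  | inr _ => - t
  end.

Lemma sumVt (F : Vt -> R) : \sum_v F v =
  \sum_j F (inl (inl j)) + \sum_i F (inl (inr i)) + \sum_l F (inr l).
Proof. by rewrite !big_sumType. Qed.

Lemma sumIc (F : Ic -> R) : \sum_c F c =
  \sum_j F (inl (inl (inl (inl (inl (inl j)))))) + \sum_i F (inl (inl (inl (inl (inl (inr i))))))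
  + \sum_j F (inl (inl (inl (inl (inr j))))) + F (inl (inl (inl (inr tt))))
  + \sum_j F (inl (inl (inr j))) + \sum_v F (inl (inr v)) + F (inr tt).
Proof. by rewrite !big_sumType !sum_unit. Qed.

Lemma sum_0mul (J : finType) (f : J -> R) : \sum_j 0 * f j = 0.
Proof. by rewrite big1 // => j _; rewrite mul0r. Qed.
Lemma sum_mul0 (J : finType) (f : J -> R) : \sum_j f j * 0 = 0.
Proof. by rewrite big1 // => j _; rewrite mulr0. Qed.

Lemma sum_delta (J : finType) (f : J -> R) (v : J) :
  \sum_v0 f v0 * (if v == v0 then 1 else 0) = f v.
Proof.
rewrite (bigD1 v) //= eqxx mulr1 big1 ?addr0 // => j hj.
by rewrite eq_sym (negbTE hj) mulr0.
Qed.
Lemma sum_delta' (J : finType) (f : J -> R) (v : J) :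
  \sum_v0 (if v0 == v then 1 else 0) * f v0 = f v.
Proof.
rewrite (bigD1 v) //= eqxx mul1r big1 ?addr0 // => j hj.
by rewrite (negbTE hj) mul0r.
Qed.

Lemma sum_mulNC (J : finType) (f g : J -> R) :
  \sum_j f j * - g j = - \sum_j g j * f j.
Proof. by rewrite -sumrN; apply: eq_bigr => j _; rewrite mulrN mulrC. Qed.

Lemma mul_col a' b' (M : 'M[R]_(a', b')) (f : 'I_b' -> R) i :
  (M *m \col_j f j) i 0 = \sum_j M i j * f j.
Proof. by rewrite mxE; apply: eq_bigr => j _; rewrite mxE. Qed.
Lemma trmul_col a' b' (M : 'M[R]_(a', b')) (f : 'I_a' -> R) j :
  (M^T *m \col_i f i) j 0 = \sum_i f i * M i j.
Proof. by rewrite mxE; apply: eq_bigr => i _; rewrite !mxE mulrC. Qed.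
Lemma dot_col n (f : 'I_n -> R) (u : 'cV[R]_n) : dot (\col_i f i) u = \sum_i f i * u i 0.
Proof. by apply: eq_bigr => i _; rewrite mxE. Qed.
Lemma dot_colr n (f : 'I_n -> R) (u : 'cV[R]_n) : dot u (\col_i f i) = \sum_i u i 0 * f i.
Proof. by apply: eq_bigr => i _; rewrite mxE. Qed.

Lemma feas_app x t th : 0 <= th ->
  (forall (mu : R) (z2 : 'cV[R]_m * 'cV[R]_p * R^o) (z1 : 'cV[R]_n2 * 'cV[R]_q),
     0 <= mu -> (forall j, (mu * th) * b2 j <= a2 j z2) ->
     (forall j, z2.2 * b1 j <= a1 j z1) -> DT x z2.1 - LG x z1 <= mu * t) ->
  exists y ps s, IF x y ps s /\ th * dot cy y <= t.
Proof.
move=> hth H.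
case: (farkas (coef th) (rhs x t)) => [[z hz]|[lam [hl hv hpos]]].
  have hnn : forall v, 0 <= z v.
    by move=> v; have := hz (inl (inr v)); rewrite /= sum_delta'.
  exists (\col_j z (inl (inl j))), (\col_i z (inl (inr i))), (\col_l z (inr l)).
  split; last first.
    have := hz (inr tt); rewrite sumVt /= !sum_0mul !addr0.
    have -> : \sum_j - th * cy j 0 * z (inl (inl j)) = - (th * dot cy (\col_j z (inl (inl j)))).
      by rewrite /dot mulr_sumr -sumrN; apply: eq_bigr => j _; rewrite mxE; ring.
    lra.
  split; first split.
  - by move=> i; rewrite !mxE; apply: hnn.
  - by move=> i; rewrite !mxE; apply: hnn.
  - by move=> i; rewrite !mxE; apply: hnn.
  split.
  - move=> i; have := hz (inl (inl (inl (inl (inl (inl i)))))).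
    by rewrite sumVt /= !sum_0mul ?add0r ?addr0 mul_col.
  - move=> i; have := hz (inl (inl (inl (inl (inl (inr i)))))).
    by rewrite sumVt /= !sum_0mul ?add0r ?addr0 mul_col.
  - move=> j; have := hz (inl (inl (inl (inl (inr j))))).
    rewrite sumVt /= !sum_0mul ?add0r ?addr0 [X in _ -> X <= _]mxE [X in _ -> _ <= X]mxE trmul_col.
    by rewrite -sumrN; under [X in _ -> _ <= X]eq_bigr do rewrite -mulrN mulrC.
  - have := hz (inl (inl (inl (inr tt)))); rewrite sumVt /= /dot.
    rewrite -!sumrN.
    have -> : \sum_i - d i 0 * z (inl (inl i)) = \sum_i - (d i 0 * (\col_j z (inl (inl j))) i 0).
      by apply: eq_bigr => i _; rewrite mxE mulNr.
    have -> : \sum_i b i 0 * z (inl (inr i)) = \sum_i (\col_j z (inl (inr j))) i 0 * b i 0.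
      by apply: eq_bigr => i _; rewrite mxE mulrC.
    have -> : \sum_i -1 * z (inr i) = \sum_i - ((\col_j z (inr j)) i 0 * ones R r i 0).
      by apply: eq_bigr => i _; rewrite !mxE mulr1 mulN1r.
    by [].
  - move=> j; have := hz (inl (inl (inr j))).
    by rewrite sumVt /= !sum_0mul ?add0r ?addr0 [X in _ -> _ <= X]mxE !mul_col.
set u : 'cV[R]_p := \col_j lam (inl (inl (inl (inl (inl (inl j)))))).
set ps' : 'cV[R]_m := \col_i lam (inl (inl (inl (inl (inl (inr i)))))).
set y' : 'cV[R]_n2 := \col_j lam (inl (inl (inl (inl (inr j))))).
set w := lam (inl (inl (inl (inr tt)))).
set v : 'cV[R]_q := \col_j lam (inl (inl (inr j))).
set mu := lam (inr tt).
have Hz2 : forall j, (mu * th) * b2 j <= a2 j ((ps', u), w).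
  case=> [[[i|i]|[]]|j] /=; rewrite ?mulr0; [by rewrite mxE; apply: hl|by rewrite mxE; apply: hl|exact: hl|].
  have e : (w *: d - (B^T *m ps' + Gy^T *m u)) j 0 =
      w * d j 0 - ((B^T *m ps') j 0 + (Gy^T *m u) j 0) by rewrite !mxE.
  rewrite e /ps' /u !trmul_col /w /mu.
  have := hv (inl (inl j)); rewrite sumIc /= !sum_mul0 ?add0r ?addr0 sum_delta.
  have := hl (inl (inr (inl (inl j)))); lra.
have Hz1 : forall j, w * b1 j <= a1 j (y', v).
  case=> [[[i|i]|i]|l] /=; rewrite ?mulr0; [by rewrite mxE; apply: hl|by rewrite mxE; apply: hl| |].
    have e : (B *m y' - Kpsi^T *m v) i 0 = (B *m y') i 0 - (Kpsi^T *m v) i 0 by rewrite !mxE.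
    rewrite e /y' /v mul_col trmul_col /w.
    have := hv (inl (inr i)); rewrite sumIc /= !sum_mul0 ?add0r ?addr0 sum_delta.
    have := hl (inl (inr (inl (inr i)))).
    rewrite sum_mulNC; lra.
  rewrite /v trmul_col /w.
  have := hv (inr l); rewrite sumIc /= !sum_mul0 ?add0r ?addr0 sum_delta.
  have := hl (inl (inr (inr l))); lra.
have := H mu ((ps', u), w) (y', v) (hl _) Hz2 Hz1.
rewrite /dualterm /lowgap /= /ps' /u /y' /v !dot_col dot_colr /mu.
move: hpos; rewrite sumIc /= sum_mul0 mulr0 !addr0 sum_mulNC.
lra.
Qed.

Local Notation FV := (fval A B b cy d Gxy Gy hy Kpsi Ks Kx k).
Local Notation MF := (master_feas Iset A B b cy d Gxy Gy hy Kpsi Ks Kx k).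

Lemma WD' x y ps s th (z2 : 'cV[R]_m * 'cV[R]_p * R^o) (z1 : 'cV[R]_n2 * 'cV[R]_q) :
  IF x y ps s -> 0 <= th -> (forall j, th * b2 j <= a2 j z2) ->
  (forall j, z2.2 * b1 j <= a1 j z1) -> DT x z2.1 - LG x z1 <= th * dot cy y.
Proof.
case: z2 => [[ps' u] w]; case: z1 => [y' v] /= hf hth h2 h1.
have hw : 0 <= w by have := h2 (inl (inr tt)); rewrite /= mulr0.
apply: (@WD x y ps s ps' u w th y' v hf) => //.
- by move=> i; rewrite mxE; have := h2 (inl (inl (inl i))); rewrite /= mulr0.
- by move=> i; rewrite mxE; have := h2 (inl (inl (inr i))); rewrite /= mulr0.
- move=> j; have := h2 (inr j); rewrite /= !mxE.
  move: ((B^T *m ps') j 0) ((Gy^T *m u) j 0) => X Y; lra.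
- by move=> i; rewrite mxE; have := h1 (inl (inl (inl i))); rewrite /= mulr0.
- by move=> i; rewrite mxE; have := h1 (inl (inl (inr i))); rewrite /= mulr0.
- by move=> i; rewrite mxE; have := h1 (inl (inr i)).
- move=> l; have := h1 (inr l); rewrite /= !mxE.
  move: ((Ks^T *m v) l 0) => X; lra.
Qed.

Lemma J1_P1 e : J1s e -> Pset a1 b1 e.
Proof. by rewrite /J1 P1E => -[]. Qed.
Lemma J2_P2 e : J2s e -> Pset a2 b2 e.
Proof. by rewrite /J2 P2E => -[]. Qed.

Lemma J2_ne : exists e, J2s e.
Proof.
have [//|hno] := boolp.pselect (exists e, J2s e).
have [z hz] := hne2.
suff : (1:R) <= 0 by rewrite ler10.
apply: (@mw_bound _ _ _ a2 b2 a2D a2Z sig2 sig2D sig2Z hsig2 hne2 (fun _ => 0) 1 _ _ _ _ z hz).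
- by move=> *; rewrite addr0.
- by move=> *; rewrite mulr0.
- by move=> e he; exfalso; apply: hno; exists e; rewrite /J2 P2E.
- by [].
Qed.

Lemma feas_cond x y ps s : IF x y ps s -> [/\ Cb x, Cc x & Cd x].
Proof.
move=> hf.
have [e0 he0] := J1_ne.
have gen : forall r0 j1, R2s r0 -> Pset a1 b1 j1 -> DT x r0.1 - r0.2 * LG x j1 <= 0.
  move=> r0 j1 hr hj.
  have hw := R2_w hr.
  have hh : homog a2 r0 by move: hr; rewrite /R2 P2E => -[/(rec_homog a2D a2Z _ hne2)].
  have H := WD' (z2 := r0) (z1 := r0.2 *: j1) hf (le_refl 0).
  have h2' : forall j, 0 * b2 j <= a2 j r0 by move=> j; rewrite mul0r; apply: hh.
  have h1' : forall j, r0.2 * b1 j <= a1 j (r0.2 *: j1).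
    by move=> j; rewrite a1Z; apply: ler_wpM2l => //; apply: hj.
  by have := H h2' h1'; rewrite LG_Z mul0r.
split.
- move=> r1 hr.
  have hh : homog a1 r1 by move: hr; rewrite /R1 P1E => -[/(rec_homog a1D a1Z _ hne1)].
  have H := WD' (z2 := 0) (z1 := r1) hf (le_refl 0).
  have h2' : forall j, 0 * b2 j <= a2 j 0 by move=> j; rewrite mul0r (a0 a2Z).
  have h1' : forall j, 0 * b1 j <= a1 j r1 by move=> j; rewrite mul0r; apply: hh.
  have := H h2' h1'; rewrite mul0r /dualterm /= !dot0l add0r; lra.
- move=> r2 hr e2; have := gen _ _ hr (J1_P1 he0); rewrite e2 mul0r subr0; exact.
- by move=> j1 r2 hj hr _; apply: gen => //; apply: J1_P1.
Qed.

Lemma infeas_fval x : ~ [/\ Cb x, Cc x & Cd x] -> FV x = +oo%E.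
Proof.
move=> hn; apply/eqP; rewrite eq_le leey /=.
apply/ereal_infP => z [y [ps [s [hf _]]]].
by exfalso; apply: hn; apply: feas_cond hf.
Qed.

Lemma feas_exists x t : [/\ Cb x, Cc x & Cd x] -> Ca x t ->
  exists y ps s, IF x y ps s /\ dot cy y <= t.
Proof.
move=> [hb hc hd] ha.
have H : forall mu z2 z1, 0 <= mu -> (forall j, (mu * 1) * b2 j <= a2 j z2) ->
    (forall j, z2.2 * b1 j <= a1 j z1) -> DT x z2.1 - LG x z1 <= mu * t.
  move=> mu z2 z1 hmu h2 h1; apply: (UB hb hc hd hmu (fun _ => ha)) h1.
  by move=> j; have := h2 j; rewrite mulr1.
have [y [ps [s [hf h]]]] := feas_app ler01 H.
by exists y, ps, s; rewrite mul1r in h.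
Qed.

Lemma feas_some x : [/\ Cb x, Cc x & Cd x] -> exists y ps s, IF x y ps s.
Proof.
move=> [hb hc hd].
have H : forall mu z2 z1, 0 <= mu -> (forall j, (mu * 0) * b2 j <= a2 j z2) ->
    (forall j, z2.2 * b1 j <= a1 j z1) -> DT x z2.1 - LG x z1 <= mu * 0.
  move=> mu z2 z1 hmu h2 h1; rewrite mulr0.
  have h0 : 0 < (0:R) -> Ca x 0 by rewrite ltxx.
  have h2' : forall j, 0 * b2 j <= a2 j z2 by move=> j; have := h2 j; rewrite mulr0.
  by have := UB hb hc hd (le_refl 0) h0 h2' h1; rewrite mul0r.
have [y [ps [s [hf _]]]] := feas_app (le_refl 0) H.
by exists y, ps, s.
Qed.

Lemma feas_val x : [/\ Cb x, Cc x & Cd x] ->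
  exists f0 : R, FV x = f0%:E /\ (forall t, Ca x t <-> f0 <= t).
Proof.
move=> hbcd.
have [y0 [ps0 [s0 hf0]]] := feas_some hbcd.
have wd : forall y ps s j2 j1, IF x y ps s -> J2s j2 -> J1s j1 ->
    DT x j2.1 - j2.2 * LG x j1 <= dot cy y.
  move=> y ps s j2 j1 hf h2 h1.
  have h2' : forall j, 1 * b2 j <= a2 j j2 by move=> j; rewrite mul1r; exact: (J2_P2 h2 j).
  have hw : 0 <= j2.2 by have := J2_P2 h2 (inl (inr tt)).
  have h1' : forall j, j2.2 * b1 j <= a1 j (j2.2 *: j1).
    by move=> j; rewrite a1Z; apply: ler_wpM2l => //; exact: (J1_P1 h1 j).
  by have := WD' hf ler01 h2' h1'; rewrite LG_Z mul1r.
pose S := [set v : R | exists j2 j1, [/\ J2s j2, J1s j1 & v = DT x j2.1 - j2.2 * LG x j1]].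
have hSne : S !=set0.
  have [e1 he1] := J1_ne; have [e2 he2] := J2_ne.
  by exists (DT x e2.1 - e2.2 * LG x e1); exists e2, e1.
have hS : has_sup S.
  split=> //; exists (dot cy y0) => v [j2 [j1 [h2 h1 ->]]]; exact: wd hf0 h2 h1.
have hCa : Ca x (sup S).
  move=> j2 j1 h2 h1; move: (sup_upper_bound hS) => /(_ (DT x j2.1 - j2.2 * LG x j1)).
  by apply; exists j2, j1.
have low : forall y ps s, IF x y ps s -> sup S <= dot cy y.
  move=> y ps s hf; apply: ge_sup hSne _ => v [j2 [j1 [h2 h1 ->]]]; exact: wd hf h2 h1.
have [y1 [ps1 [s1 [hf1 hle]]]] := feas_exists hbcd hCa.
exists (sup S); split.
  apply/eqP; rewrite eq_le; apply/andP; split.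
    apply: ge_ereal_inf; exists (dot cy y1)%:E; last by rewrite lee_fin.
    by exists y1, ps1, s1.
  apply/ereal_infP => z [y [ps [s [hf ->]]]]; rewrite lee_fin; exact: low hf.
move=> t; split => [ha|hft].
  have [y [ps [s [hf h]]]] := feas_exists hbcd ha; exact: le_trans (low _ _ _ hf) h.
move=> j2 j1 h2 h1; apply: le_trans hft; exact: hCa.
Qed.

Lemma MF_iff x t : MF x t <-> Xset Iset x /\ Ca x t /\ [/\ Cb x, Cc x & Cd x].
Proof. by split => [[hx ha hb hc hd]|[hx [ha [hb hc hd]]]]. Qed.

Local Notation MV := (mip_val cx Iset A B b cy d Gxy Gy hy Kpsi Ks Kx k).
Local Notation MAV := (master_val cx Iset A B b cy d Gxy Gy hy Kpsi Ks Kx k).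

Lemma vals_eq : MV = MAV.
Proof.
apply/eqP; rewrite eq_le; apply/andP; split.
  apply/ereal_infP => z [x [t [/MF_iff [hx [ha hbcd]] ->]]].
  have [f0 [hfv hiff]] := feas_val hbcd.
  apply: ge_ereal_inf; exists ((dot cx x)%:E + FV x); first by exists x.
  by rewrite hfv -EFinD lee_fin lerD2l; apply/hiff.
apply/ereal_infP => z [x [hx ->]].
have [hbcd|hn] := boolp.pselect [/\ Cb x, Cc x & Cd x].
  have [f0 [hfv hiff]] := feas_val hbcd.
  apply: ge_ereal_inf; exists (dot cx x + f0)%:E; last by rewrite hfv EFinD.
  exists x, f0; split=> //; apply/MF_iff; split=> //; split=> //; exact/hiff.
by rewrite infeas_fval // addey // leey.
Qed.

Lemma opt_iff x : mip_opt cx Iset A B b cy d Gxy Gy hy Kpsi Ks Kx k x <->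
  master_opt cx Iset A B b cy d Gxy Gy hy Kpsi Ks Kx k x.
Proof.
split.
  move=> [hx [hlt he]].
  have [hbcd|hn] := boolp.pselect [/\ Cb x, Cc x & Cd x]; last first.
    by move: hlt; rewrite infeas_fval // ltxx.
  have [f0 [hfv hiff]] := feas_val hbcd.
  exists f0; split.
    apply/MF_iff; split=> //; split=> //; exact/hiff.
  by rewrite EFinD -hfv he vals_eq.
move=> [t [/MF_iff [hx [ha hbcd]] he]].
have [f0 [hfv hiff]] := feas_val hbcd.
have hft := (hiff t).1 ha.
split=> //; split; first by rewrite hfv ltey.
apply/eqP; rewrite eq_le; apply/andP; split.
  rewrite vals_eq -he hfv -EFinD lee_fin lerD2l //.
apply: ge_ereal_inf; exists ((dot cx x)%:E + FV x) => //; by exists x.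
Qed.

End App.

Theorem corollary1 (R : realType) (n1 n2 m p q r : nat)
  (cx : 'cV[R]_n1) (I : {set 'I_n1})
  (A : 'M[R]_(m, n1)) (B : 'M[R]_(m, n2)) (b : 'cV[R]_m)
  (cy d : 'cV[R]_n2) (Gxy : 'M[R]_(p, n1)) (Gy : 'M[R]_(p, n2)) (hy : 'cV[R]_p)
  (Kpsi : 'M[R]_(q, m)) (Ks : 'M[R]_(q, r)) (Kx : 'M[R]_(q, n1)) (k : 'cV[R]_q) :
  P1 B b Kpsi Ks !=set0 ->
  P2 B cy d Gy !=set0 ->
  mip_val cx I A B b cy d Gxy Gy hy Kpsi Ks Kx k
    = master_val cx I A B b cy d Gxy Gy hy Kpsi Ks Kx k /\
  (forall x : 'cV[R]_n1,
     mip_opt cx I A B b cy d Gxy Gy hy Kpsi Ks Kx k x <->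
     master_opt cx I A B b cy d Gxy Gy hy Kpsi Ks Kx k x).
Proof.
move=> h1 h2; split; first exact: vals_eq h1 h2.
by move=> x; exact: opt_iff h1 h2 x.
Qed.
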